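(* Let $\mathfrak{g}$ be a nilpotent Lie algebra over $\mathbb{R}$ of dimension $2p+1$ admitting a contact form, i.e. a linear form $\omega\in\mathfrak{g}^*$ with $\omega\wedge(d\omega)^p\neq 0$, where $d\omega(X,Y)=-\omega([X,Y])$. Then $\mathfrak{g}$ is a one-dimensional central extension of a Lie algebra admitting an affine structure; that is, there is an exact sequence of Lie algebras $0\to V\to\mathfrak{g}\to\mathfrak{h}\to 0$ with $V$ one-dimensional and central in $\mathfrak{g}$, and $\mathfrak{h}$ admits an affine structure.
   Context: An affine structure on a Lie algebra $\mathfrak{h}$ over $\mathbb{R}$ is a bilinear map $\nabla:\mathfrak{h}\times\mathfrak{h}\to\mathfrak{h}$ such that for all $X,Y,Z\in\mathfrak{h}$: (1) $\nabla(X,Y)-\nabla(Y,X)=[X,Y]$, and (2) $\nabla(X,\nabla(Y,Z))-\nabla(Y,\nabla(X,Z))=\nabla([X,Y],Z)$. *)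

(* Defs.v *)
From HB Require Import structures.
From mathcomp Require Import all_boot all_order all_algebra all_fingroup.
From mathcomp Require Import reals.
Set Implicit Arguments. Unset Strict Implicit. Unset Printing Implicit Defensive.
Import GRing.Theory Num.Theory.
Local Open Scope ring_scope.

(* A finite-dimensional real Lie algebra of dimension n is modelled as the
   coordinate space 'cV[R]_n equipped with a bracket. *)
Definition is_lie_bracket (R : realType) (n : nat)
    (br : 'cV[R]_n -> 'cV[R]_n -> 'cV[R]_n) : Prop :=
  [/\ (forall (a : R) x y z, br (a *: x + y) z = a *: br x z + br y z),
      (forall (a : R) x y z, br z (a *: x + y) = a *: br z x + br z y),
      (forall x, br x x = 0) &
      (forall x y z, br x (br y z) + br y (br z x) + br z (br x y) = 0)].

Fixpoint iter_bracket (R : realType) (n : nat)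
    (br : 'cV[R]_n -> 'cV[R]_n -> 'cV[R]_n) (xs : seq 'cV[R]_n) (y : 'cV[R]_n)
    : 'cV[R]_n :=
  if xs is x :: xs' then br x (iter_bracket br xs' y) else y.

(* Nilpotent: some term g^k of the lower central series vanishes, i.e. all
   iterated brackets of length k+1 vanish (g^k is spanned by them). *)
Definition is_nilpotent (R : realType) (n : nat)
    (br : 'cV[R]_n -> 'cV[R]_n -> 'cV[R]_n) : Prop :=
  exists k : nat, forall (xs : seq 'cV[R]_n) y,
    size xs = k -> iter_bracket br xs y = 0.

Definition dform (R : realType) (n : nat)
    (br : 'cV[R]_n -> 'cV[R]_n -> 'cV[R]_n) (w : 'rV[R]_n)
    (x y : 'cV[R]_n) : R :=
  - (w *m br x y) 0 0.

(* (omega /\ (d omega)^p)(X_0, ..., X_{2p}), up to a nonzero normalising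
   constant (which is irrelevant for non-vanishing): the alternation of
   omega(X_0) * dω(X_1,X_2) * ... * dω(X_{2p-1},X_{2p}). *)
Definition contact_top_form (R : realType) (p : nat)
    (br : 'cV[R]_(p.*2.+1) -> 'cV[R]_(p.*2.+1) -> 'cV[R]_(p.*2.+1))
    (w : 'rV[R]_(p.*2.+1)) (X : 'I_(p.*2.+1) -> 'cV[R]_(p.*2.+1)) : R :=
  \sum_(s : 'S_(p.*2.+1))
     (-1) ^+ odd_perm s * ((w *m X (s ord0)) 0 0 *
       \prod_(i < p) dform br w (X (s (inord i.*2.+1))) (X (s (inord i.*2.+2)))).

Definition is_contact_form (R : realType) (p : nat)
    (br : 'cV[R]_(p.*2.+1) -> 'cV[R]_(p.*2.+1) -> 'cV[R]_(p.*2.+1))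
    (w : 'rV[R]_(p.*2.+1)) : Prop :=
  exists X : 'I_(p.*2.+1) -> 'cV[R]_(p.*2.+1), contact_top_form br w X != 0.

Definition is_affine_structure (R : realType) (m : nat)
    (br : 'cV[R]_m -> 'cV[R]_m -> 'cV[R]_m)
    (nabla : 'cV[R]_m -> 'cV[R]_m -> 'cV[R]_m) : Prop :=
  [/\ (forall (a : R) x y z, nabla (a *: x + y) z = a *: nabla x z + nabla y z),
      (forall (a : R) x y z, nabla z (a *: x + y) = a *: nabla z x + nabla z y),
      (forall x y, nabla x y - nabla y x = br x y) &
      (forall x y z, nabla x (nabla y z) - nabla y (nabla x z) = nabla (br x y) z)].

Definition admits_affine_structure (R : realType) (m : nat)
    (br : 'cV[R]_m -> 'cV[R]_m -> 'cV[R]_m) : Prop :=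
  exists nabla, is_affine_structure br nabla.

(* Main.v *)
Require Import Defs.
From HB Require Import structures.
From mathcomp Require Import all_boot all_order all_algebra all_fingroup.
From mathcomp Require Import reals.
From mathcomp Require Import ring lra zify.
From Stdlib Require Import Classical.
Import GRing.Theory Num.Theory.
Local Open Scope ring_scope.
Set Implicit Arguments. Unset Strict Implicit. Unset Printing Implicit Defensive.
Lemma sum_delta (R : realType) k (a : 'I_k) (f : 'I_k -> R) :
  \sum_c ((a == c)%:R * f c) = f a.
Proof.
rewrite (bigD1 a) //= eqxx mul1r big1 ?addr0 // => c /negbTE.
by rewrite eq_sym => ->; rewrite mul0r.
Qed.

Section Coord.
Variables (R : realType) (m : nat) (v : 'cV[R]_(m.+1)) (i0 : 'I_m.+1).
Hypothesis vi0 : v i0 0 != 0.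

Definition Am : 'M[R]_(m, m.+1) := \matrix_(r, c)
  ((lift i0 r == c)%:R - v (lift i0 r) 0 / v i0 0 * (i0 == c)%:R).
Definition Sm : 'M[R]_(m.+1, m) := \matrix_(c, r) (c == lift i0 r)%:R.

Lemma AxE (x : 'cV[R]_m.+1) (r : 'I_m) : (Am *m x) r 0 = x (lift i0 r) 0 - v (lift i0 r) 0 / v i0 0 * x i0 0.
Proof.
rewrite mxE.
under eq_bigr => c _ do rewrite mxE mulrBl -mulrA.
rewrite sumrB sum_delta; congr (_ - _).
rewrite (eq_bigr (fun c => (i0 == c)%:R * (v (lift i0 r) 0 / v i0 0 * x c 0))) ?sum_delta // => c _.
rewrite /=; ring.
Qed.

Lemma ASm : Am *m Sm = 1%:M.
Proof.
apply/matrixP => r r'.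
have -> : (Am *m Sm) r r' = (Am *m col r' Sm) r 0 by rewrite !mxE; apply: eq_bigr => c _; rewrite !mxE.
rewrite AxE !mxE (inj_eq (@lift_inj _ i0)) eq_sym.
by rewrite (negbTE (neq_lift i0 r')) mulr0 subr0.
Qed.

Lemma kerAm (x : 'cV[R]_m.+1) : Am *m x = 0 <-> exists a, x = a *: v.
Proof.
split.
  move=> h; exists (x i0 0 / v i0 0); apply/matrixP => c j.
  rewrite (ord1 j) !mxE.
  case: (unliftP i0 c) => [r ->|->].
    move/matrixP: h => /(_ r 0); rewrite AxE mxE => /eqP; rewrite subr_eq0 => /eqP ->.
    by rewrite /=; ring.
  by rewrite divfK.
case=> a ->; apply/matrixP => r j; rewrite (ord1 j) AxE !mxE.
by field.
Qed.
End Coord.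
Lemma self_add0 (V : zmodType) (b : V) : b = b + b -> b = 0.
Proof. by rewrite -{1}[b]addr0 => /addrI. Qed.

Section Br.
Variables (R : realType) (n : nat) (br : 'cV[R]_n -> 'cV[R]_n -> 'cV[R]_n).
Hypothesis Hlie : is_lie_bracket br.

Lemma brL a x y z : br (a *: x + y) z = a *: br x z + br y z.
Proof. by case: Hlie. Qed.
Lemma brR a x y z : br z (a *: x + y) = a *: br z x + br z y.
Proof. by case: Hlie. Qed.
Lemma brxx x : br x x = 0.
Proof. by case: Hlie. Qed.
Lemma brJ x y z : br x (br y z) + br y (br z x) + br z (br x y) = 0.
Proof. by case: Hlie. Qed.
Lemma br0l z : br 0 z = 0.
Proof. apply: self_add0; have := brL 1 0 0 z; by rewrite addr0 !scale1r. Qed.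
Lemma br0r z : br z 0 = 0.
Proof. by apply: self_add0; have := brR 1 0 0 z; by rewrite addr0 !scale1r. Qed.
Lemma brDl x y z : br (x + y) z = br x z + br y z.
Proof. by have := brL 1 x y z; rewrite !scale1r. Qed.
Lemma brDr x y z : br z (x + y) = br z x + br z y.
Proof. by have := brR 1 x y z; rewrite !scale1r. Qed.
Lemma brZl a x z : br (a *: x) z = a *: br x z.
Proof. by have := brL a x 0 z; rewrite !addr0 br0l addr0. Qed.
Lemma brZr a x z : br z (a *: x) = a *: br z x.
Proof. by have := brR a x 0 z; rewrite !addr0 br0r addr0. Qed.
Lemma brNl x z : br (- x) z = - br x z.
Proof. by rewrite -scaleN1r brZl scaleN1r. Qed.
Lemma brNr x z : br z (- x) = - br z x.
Proof. by rewrite -scaleN1r brZr scaleN1r. Qed.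
Lemma brA x y : br x y = - br y x.
Proof.
have := brxx (x + y); rewrite brDl !brDr !brxx add0r addr0 => /eqP.
by rewrite addr_eq0 => /eqP.
Qed.
End Br.

Definition wv (R : realType) n (w : 'rV[R]_n) (u : 'cV[R]_n) : R := (w *m u) 0 0.
Lemma wvD (R : realType) n (w : 'rV[R]_n) x y : wv w (x + y) = wv w x + wv w y.
Proof. by rewrite /wv mulmxDr mxE. Qed.
Lemma wvZ (R : realType) n (w : 'rV[R]_n) a x : wv w (a *: x) = a * wv w x.
Proof. by rewrite /wv -scalemxAr mxE. Qed.
Lemma wvN (R : realType) n (w : 'rV[R]_n) x : wv w (- x) = - wv w x.
Proof. by rewrite /wv mulmxN mxE. Qed.
Lemma wv0 (R : realType) n (w : 'rV[R]_n) : wv w 0 = 0.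
Proof. by rewrite /wv mulmx0 mxE. Qed.

Definition islin (R : realType) k (L : 'cV[R]_k -> R) :=
  forall a x y, L (a *: x + y) = a * L x + L y.

Section Lin.
Variables (R : realType) (k : nat) (L : 'cV[R]_k -> R).
Hypothesis HL : islin L.
Lemma lin0 : L 0 = 0.
Proof. by apply: self_add0; have := HL 1 0 0; rewrite scale1r addr0 mul1r. Qed.
Lemma linD x y : L (x + y) = L x + L y.
Proof. by have := HL 1 x y; rewrite scale1r mul1r. Qed.
Lemma linZ a x : L (a *: x) = a * L x.
Proof. by have := HL a x 0; rewrite !addr0 lin0 addr0. Qed.
Lemma linN x : L (- x) = - L x.
Proof. by rewrite -scaleN1r linZ mulN1r. Qed.
Lemma linB x y : L (x - y) = L x - L y.
Proof. by rewrite linD linN. Qed.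
Lemma lin_sum (I : finType) (c : I -> R) (y : I -> 'cV[R]_k) :
  L (\sum_i c i *: y i) = \sum_i c i * L (y i).
Proof.
rewrite (big_morph L linD lin0); apply: eq_bigr => i _; exact: linZ.
Qed.
Lemma lin_rep (x : 'cV[R]_k) : L x = \sum_j x j 0 * L (delta_mx j 0).
Proof.
rewrite -lin_sum; congr (L _).
rewrite {1}[x]matrix_sum_delta; apply: eq_bigr => j _; by rewrite big_ord1.
Qed.
End Lin.

Section Quot.
Variables (R : realType) (n m : nat) (br : 'cV[R]_n -> 'cV[R]_n -> 'cV[R]_n)
  (w : 'rV[R]_n) (A : 'M[R]_(m, n)) (S : 'M[R]_(n, m)) (v : 'cV[R]_n).
Hypothesis Hlie : is_lie_bracket br.
Hypothesis HAS : A *m S = 1%:M.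
Hypothesis HkerA : forall x, A *m x = 0 <-> exists a, x = a *: v.
Hypothesis Hvc : forall x, br v x = 0.
Hypothesis Hrad : forall x, (forall y, wv w (br x y) = 0) -> exists a, x = a *: v.

Lemma SAx x : exists b, S *m (A *m x) = x + b *: v.
Proof.
have : A *m (S *m (A *m x) - x) = 0.
  by rewrite mulmxBr !mulmxA HAS mul1mx subrr.
case/HkerA => b hb; exists b; by rewrite -hb addrC subrK.
Qed.

Lemma brSAl x y : br (S *m (A *m x)) y = br x y.
Proof. by case: (SAx x) => b ->; rewrite brDl // brZl // Hvc scaler0 addr0. Qed.
Lemma brSAr x y : br y (S *m (A *m x)) = br y x.
Proof.
case: (SAx x) => b ->; rewrite brDr // brZr // (brA Hlie y v) Hvc oppr0.
by rewrite scaler0 addr0.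
Qed.

Definition brh (a b : 'cV[R]_m) : 'cV[R]_m := A *m br (S *m a) (S *m b).

Lemma brh_morph x y : A *m br x y = brh (A *m x) (A *m y).
Proof. by rewrite /brh brSAl brSAr. Qed.

Lemma brh_lie : is_lie_bracket brh.
Proof.
split.
- by move=> a x y z; rewrite /brh mulmxDr -scalemxAr brL // mulmxDr -scalemxAr.
- by move=> a x y z; rewrite /brh mulmxDr -scalemxAr brR // mulmxDr -scalemxAr.
- by move=> x; rewrite /brh brxx // mulmx0.
- move=> x y z; rewrite /brh !brSAr.
  by rewrite -!mulmxDr brJ // mulmx0.
Qed.

Definition Om (a b : 'cV[R]_m) : R := wv w (br (S *m a) (S *m b)).

Lemma OmL a x y z : Om (a *: x + y) z = a * Om x z + Om y z.
Proof. by rewrite /Om mulmxDr -scalemxAr brL // wvD wvZ. Qed.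
Lemma OmR a x y z : Om z (a *: x + y) = a * Om z x + Om z y.
Proof. by rewrite /Om mulmxDr -scalemxAr brR // wvD wvZ. Qed.

Lemma Om_nondeg a : (forall c, Om a c = 0) -> a = 0.
Proof.
move=> h.
have : forall y, wv w (br (S *m a) y) = 0.
  by move=> y; rewrite -brSAr; apply: h.
case/Hrad => b hb.
have : A *m (S *m a) = 0 by rewrite hb; apply/HkerA; exists b.
by rewrite mulmxA HAS mul1mx.
Qed.

Lemma Om_eq u u' : (forall c, Om u c = Om u' c) -> u = u'.
Proof.
move=> h; apply/eqP; rewrite -subr_eq0; apply/eqP/Om_nondeg => c.
have := OmL (-1) u' u c; rewrite scaleN1r addrC => ->.
by rewrite h; ring.
Qed.

Definition ee (j : 'I_m) : 'cV[R]_m := delta_mx j 0.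
Definition G : 'M[R]_m := \matrix_(i, j) Om (ee i) (ee j).

Lemma OmL_lin c : islin (fun u => Om u c).
Proof. by move=> a x y; apply: OmL. Qed.
Lemma OmR_lin u : islin (Om u).
Proof. by move=> a x y; apply: OmR. Qed.

Lemma rowG (u : 'cV[R]_m) j : (u^T *m G) 0 j = Om u (ee j).
Proof.
rewrite (lin_rep (OmL_lin (ee j)) u) mxE; apply: eq_bigr => i _.
by rewrite !mxE.
Qed.

Lemma G_unit : G \in unitmx.
Proof.
rewrite -row_free_unit -kermx_eq0; apply/eqP/row_matrixP => i.
rewrite row0.
set r := row i (kermx G).
have hr : r *m G = 0 by rewrite /r -row_mul mulmx_ker row0.
rewrite -[r]trmxK; apply/eqP; rewrite trmx_eq0; apply/eqP.
apply: Om_nondeg => c.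
rewrite (lin_rep (OmR_lin r^T) c) big1 // => j _.
by rewrite -rowG trmxK hr mxE mulr0.
Qed.

Definition riesz (f : 'cV[R]_m -> R) : 'cV[R]_m :=
  ((\row_j f (ee j)) *m invmx G)^T.

Lemma rieszP f : islin f -> forall c, Om (riesz f) c = f c.
Proof.
move=> hf c.
rewrite (lin_rep (OmR_lin (riesz f)) c) (lin_rep hf c); apply: eq_bigr => j _.
by rewrite -rowG /riesz trmxK mulmxKV ?G_unit // mxE.
Qed.

Definition nab (a b : 'cV[R]_m) : 'cV[R]_m := riesz (fun c => - Om b (brh a c)).

Lemma brhR a z x y : brh z (a *: x + y) = a *: brh z x + brh z y.
Proof. by case: brh_lie. Qed.
Lemma brhL a z x y : brh (a *: x + y) z = a *: brh x z + brh y z.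
Proof. by case: brh_lie. Qed.

Lemma nabP a b c : Om (nab a b) c = - Om b (brh a c).
Proof.
apply: rieszP => x y z /=.
rewrite brhR OmR; ring.
Qed.

Lemma Om_brh_r x y z : Om x (brh y z) = wv w (br (S *m x) (br (S *m y) (S *m z))).
Proof. by rewrite /Om /brh brSAr. Qed.
Lemma Om_brh_l x y z : Om (brh x y) z = wv w (br (br (S *m x) (S *m y)) (S *m z)).
Proof. by rewrite /Om /brh brSAl. Qed.
Lemma brh_brh_r x y z : S *m brh x (brh y z) = S *m A *m br (S *m x) (br (S *m y) (S *m z)).
Proof. by rewrite /brh brSAr mulmxA. Qed.

Lemma affine_brh : admits_affine_structure brh.
Proof.
exists nab; split.
- move=> a x y z; apply: Om_eq => c.
  by rewrite nabP OmL (nabP x) (nabP y) brhL OmR; ring.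
- move=> a x y z; apply: Om_eq => c.
  by rewrite !OmL !nabP OmL; ring.
- move=> x y; apply: Om_eq => c.
  have := OmL (-1) (nab y x) (nab x y) c; rewrite scaleN1r addrC => ->.
  rewrite !nabP !Om_brh_r Om_brh_l.
  set X := S *m x; set Y := S *m y; set Z := S *m c.
  have J := congr1 (wv w) (brJ Hlie X Y Z).
  rewrite !wvD wv0 in J.
  rewrite (brA Hlie Z X) brNr // wvN in J.
  rewrite (brA Hlie Z) wvN in J.
  lra.
- move=> x y z; apply: Om_eq => u.
  have := OmL (-1) (nab y (nab x z)) (nab x (nab y z)) u; rewrite scaleN1r addrC => ->.
  rewrite !nabP !Om_brh_r /brh !brSAr brSAl.
  set X := S *m x; set Y := S *m y; set Z := S *m z; set U := S *m u.
  have J := congr1 (fun t => wv w (br Z t)) (brJ Hlie X Y U).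
  rewrite /= !brDr // br0r // !wvD wv0 in J.
  rewrite (brA Hlie U X) brNr // brNr // wvN in J.
  rewrite (brA Hlie U) brNr // wvN in J.
  lra.
Qed.
End Quot.

Lemma sum_entry (R : realType) k (I : finType) (a : I -> R) (X : I -> 'cV[R]_k) r :
  (\sum_i a i *: X i) r 0 = \sum_i a i * X i r 0.
Proof. by rewrite summxE; apply: eq_bigr => i _; rewrite mxE. Qed.

Lemma dep (R : realType) k (X : 'I_k -> 'cV[R]_k) (kk : 'cV[R]_k) : kk != 0 ->
  exists j c d, X j = \sum_i c i *: X i + d *: kk /\ c j = 0.
Proof.
move=> hk.
pose Xm : 'M[R]_(k, k) := \matrix_(i, l) X i l 0.
pose N := col_mx Xm kk^T.
have hK : kermx N != 0.
  rewrite -mxrank_eq0 mxrank_ker subn_eq0 -ltnNge.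
  have := rank_leq_col N; lia.
have [i hi] : exists i, row i (kermx N) != 0.
  apply/existsP; move: hK; apply: contraR; rewrite negb_exists => /forallP h.
  apply/eqP/row_matrixP => i; rewrite row0; apply/eqP; exact/negPn/h.
set u := row i (kermx N) in hi.
have hu : u *m N = 0 by rewrite /u -row_mul mulmx_ker row0.
rewrite -[u]hsubmxK mul_row_col in hu.
have hud : u = row_mx (lsubmx u) (rsubmx u) by rewrite hsubmxK.
move: (lsubmx u) (rsubmx u) hu hud => c dd hu hud.
clearbody u.
have E r : \sum_l c 0 l * X l r 0 + dd 0 0 * kk r 0 = 0.
  move/matrixP: hu => /(_ 0 r); rewrite !mxE big_ord1 !mxE => h; rewrite -[RHS]h.
  by congr (_ + _); apply: eq_bigr => l _; rewrite mxE.
have [c0|cn0] := eqVneq c 0.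
  have dd0 : dd 0 0 != 0.
    apply: contra hi => /eqP h0; rewrite hud c0.
    have -> : dd = 0 by apply/matrixP => a b; rewrite (ord1 a) (ord1 b) h0 mxE.
    by rewrite row_mx0.
  exfalso; move/eqP: hk; apply; apply/matrixP => r j; rewrite (ord1 j) mxE.
  have := E r; rewrite c0 big1 ?add0r => [/eqP|l _]; last by rewrite mxE mul0r.
  by rewrite mulf_eq0 (negbTE dd0) => /eqP.
have [j hj] : exists j, c 0 j != 0.
  apply/existsP; move: cn0; apply: contraR; rewrite negb_exists => /forallP h.
  apply/eqP/matrixP => a b; rewrite (ord1 a) mxE; exact/eqP/negPn/h.
exists j, (fun i => if i == j then 0 else - c 0 i / c 0 j), (- dd 0 0 / c 0 j).
split; last by rewrite eqxx.
apply/matrixP => r b; rewrite (ord1 b) mxE sum_entry mxE.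
rewrite (bigD1 j) //= eqxx mul0r add0r.
have := E r; rewrite (bigD1 j) //=.
set s := \sum_(i0 | i0 != j) c 0 i0 * X i0 r 0.
have -> : \sum_(i0 | i0 != j) (if i0 == j then 0 else - c 0 i0 / c 0 j) * X i0 r 0
    = - s / c 0 j.
  rewrite /s -sumrN mulr_suml; apply: eq_bigr => l /negbTE ->.
  rewrite /=; ring.
move=> h.
have -> : s = - (c 0 j * X j r 0) - dd 0 0 * kk r 0.
  apply/eqP; rewrite -subr_eq0 -h; apply/eqP; ring.
by field.
Qed.

Section Top.
Variables (R : realType) (p : nat)
  (br : 'cV[R]_(p.*2.+1) -> 'cV[R]_(p.*2.+1) -> 'cV[R]_(p.*2.+1))
  (w : 'rV[R]_(p.*2.+1)).
Hypothesis Hlie : is_lie_bracket br.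
Local Notation n := (p.*2.+1).

Definition F (Z : 'I_n -> 'cV[R]_n) : R :=
  (w *m Z ord0) 0 0 *
  \prod_(i < p) dform br w (Z (inord i.*2.+1)) (Z (inord i.*2.+2)).

Lemma F_ext Z Z' : (forall k, Z k = Z' k) -> F Z = F Z'.
Proof.
move=> h; rewrite /F h; congr (_ * _); apply: eq_bigr => i _; by rewrite !h.
Qed.

Definition upd (Z : 'I_n -> 'cV[R]_n) (k0 : 'I_n) (y : 'cV[R]_n) :=
  fun k => if k == k0 then y else Z k.

Lemma inord_eq (a : nat) (k0 : 'I_n) : (a < n)%N -> (inord a == k0) = (a == k0 :> nat).
Proof. by move=> h; rewrite -(inj_eq val_inj) /= inordK. Qed.

Lemma F_form Z k0 : exists C (L : 'cV[R]_n -> R),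
  (forall y, F (upd Z k0 y) = C * L y) /\
  (L = (fun y => wv w y) \/ (exists x, L = fun y => dform br w y x) \/
   (exists x, L = fun y => dform br w x y)).
Proof.
have [->|nz] := eqVneq k0 ord0.
  exists (\prod_(i < p) dform br w (Z (inord i.*2.+1)) (Z (inord i.*2.+2))), (wv w).
  split; last by left.
  move=> y; rewrite /F /upd eqxx mulrC /wv; congr (_ * _).
  apply: eq_bigr => i _; have := ltn_ord i => hi.
  by rewrite !inord_eq //; lia.
have [i0 hi0] : exists i0 : 'I_p, (k0 : nat) = i0.*2.+1 \/ (k0 : nat) = i0.*2.+2.
  have : (k0 : nat) != 0%N by apply: contra nz => /eqP h; apply/eqP/val_inj.
  move=> hk0.
  have hk : (k0.-1./2 < p)%N.
    rewrite ltn_half_double; have := ltn_ord k0; lia.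
  exists (Ordinal hk) => /=.
  have := odd_double_half k0.-1.
  case: (odd k0.-1) => /=; lia.
have ne0 : ord0 == k0 = false by rewrite eq_sym (negbTE nz).
have hrest : forall y, \prod_(i < p | i != i0)
      dform br w (upd Z k0 y (inord i.*2.+1)) (upd Z k0 y (inord i.*2.+2)) =
    \prod_(i < p | i != i0) dform br w (Z (inord i.*2.+1)) (Z (inord i.*2.+2)).
  move=> y; apply: eq_bigr => i hi; have := ltn_ord i => hip.
  have hi' : (i : nat) != i0 by [].
  rewrite /upd !inord_eq; try lia.
  have -> : (i.*2.+1 == k0)%N = false by apply/negbTE; lia.
  by have -> : (i.*2.+2 == k0)%N = false by apply/negbTE; lia.
have hi := ltn_ord i0.
case: hi0 => hk.
  exists (wv w (Z ord0) * \prod_(i < p | i != i0) dform br w (Z (inord i.*2.+1)) (Z (inord i.*2.+2))).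
  exists (fun y => dform br w y (Z (inord i0.*2.+2))).
  split; last by right; left; eexists.
  move=> y; rewrite /F (bigD1 i0) //= hrest.
  rewrite {1 2 3}/upd ne0 !inord_eq -?hk ?eqxx; try lia.
  rewrite ifN; last lia.
  rewrite /wv; ring.
exists (wv w (Z ord0) * \prod_(i < p | i != i0) dform br w (Z (inord i.*2.+1)) (Z (inord i.*2.+2))).
exists (fun y => dform br w (Z (inord i0.*2.+1)) y).
split; last by right; right; eexists.
move=> y; rewrite /F (bigD1 i0) //= hrest.
rewrite {1 2 3}/upd ne0 !inord_eq -?hk ?eqxx; try lia.
rewrite ifN; last lia.
rewrite /wv; ring.
Qed.

Definition T X := contact_top_form br w X.
Lemma TE X : T X = \sum_(s : 'S_n) (-1) ^+ odd_perm s * F (fun k => X (s k)).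
Proof. by []. Qed.

Lemma T_ext X X' : (forall k, X k = X' k) -> T X = T X'.
Proof. move=> h; rewrite !TE; apply: eq_bigr => s _; congr (_ * _); exact: F_ext. Qed.

Lemma Lform_lin (L : 'cV[R]_n -> R) :
  (L = (fun y => wv w y) \/ (exists x, L = fun y => dform br w y x) \/
   (exists x, L = fun y => dform br w x y)) -> islin L.
Proof.
case=> [->|[[x ->]|[x ->]]] a y z.
- by rewrite wvD wvZ.
- rewrite /dform brL // -!/(wv w _) wvD wvZ; ring.
- rewrite /dform brR // -!/(wv w _) wvD wvZ; ring.
Qed.

Lemma Lform_k (L : 'cV[R]_n -> R) k : wv w k = 0 -> (forall y, wv w (br k y) = 0) ->
  (L = (fun y => wv w y) \/ (exists x, L = fun y => dform br w y x) \/
   (exists x, L = fun y => dform br w x y)) -> L k = 0.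
Proof.
move=> hw hb; case=> [->|[[x ->]|[x ->]]] //.
- by rewrite /dform -/(wv w _) hb oppr0.
- by rewrite /dform (brA Hlie x) -/(wv w _) wvN hb oppr0 oppr0.
Qed.

Lemma upd_perm X j (s : 'S_n) y :
  F (fun k => upd X j y (s k)) = F (upd (fun k => X (s k)) (s^-1 j)%g y).
Proof.
apply: F_ext => k; rewrite /upd.
by rewrite -{1}[j](permKV s) (inj_eq perm_inj).
Qed.

Lemma T_lin X j : islin (fun y => T (upd X j y)).
Proof.
move=> a y z; rewrite !TE mulr_sumr -big_split; apply: eq_bigr => s _ /=.
rewrite (upd_perm X j s (a *: y + z)) (upd_perm X j s y) (upd_perm X j s z).
case: (F_form (fun k => X (s k)) (s^-1 j)%g) => C [L [hF hL]].
rewrite !hF (Lform_lin hL).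
move: ((-1) ^+ _) => e; ring.
Qed.

Lemma T_k X j k : wv w k = 0 -> (forall y, wv w (br k y) = 0) -> T (upd X j k) = 0.
Proof.
move=> hw hb; rewrite TE; apply: big1 => s _.
rewrite (upd_perm X j s k).
case: (F_form (fun k => X (s k)) (s^-1 j)%g) => C [L [hF hL]].
by rewrite hF (Lform_k hw hb hL) !mulr0.
Qed.

Lemma T_alt X i j : i != j -> X i = X j -> T X = 0.
Proof.
move=> hij hX.
pose t := tperm i j.
have ht y : X (t y) = X y.
  by rewrite /t; case: (tpermP i j y) => [->|->|] //.
have : T X = - T X.
  rewrite {1}TE (reindex_inj (@mulIg _ t)) /= TE -sumrN.
  apply: eq_bigr => s _.
  rewrite odd_permM odd_tperm hij signr_addb expr1 mulrN1 mulNr.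
  congr (- (_ * _)); apply: F_ext => k; by rewrite permM ht.
move: (T X) => e h; lra.
Qed.

Lemma T_zero k : k != 0 -> wv w k = 0 -> (forall y, wv w (br k y) = 0) ->
  forall X, T X = 0.
Proof.
move=> hk hw hb X.
case: (dep X hk) => j [c [d [hj hcj]]].
have -> : T X = T (upd X j (X j)).
  by apply: T_ext => l; rewrite /upd; case: eqP => // ->.
pose Lf := fun y => T (upd X j y).
have hL : islin Lf by exact: T_lin.
have -> : T (upd X j (X j)) = Lf (X j) by [].
rewrite /Lf hj addrC.
have := linD hL (d *: k) (\sum_i c i *: X i); rewrite /Lf => ->.
have := linZ hL d k; rewrite /Lf => ->.
rewrite T_k // mulr0 add0r.
have := lin_sum hL c X; rewrite /Lf => ->.
apply: big1 => i _.
case: (eqVneq i j) => [->|hij]; first by rewrite hcj mul0r.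
rewrite /Lf (@T_alt _ i j) ?mulr0 //.
by rewrite /upd (negbTE hij) eqxx.
Qed.
End Top.

Lemma center_exists (R : realType) k (br : 'cV[R]_k.+1 -> 'cV[R]_k.+1 -> 'cV[R]_k.+1) :
  is_lie_bracket br -> is_nilpotent br -> exists v, v != 0 /\ forall x, br v x = 0.
Proof.
move=> Hlie [N HN]; elim: N HN => [|N IH] HN.
  exfalso; have := HN [::] (delta_mx 0 0) erefl => /= /matrixP /(_ 0 0).
  by rewrite !mxE eqxx /= => /eqP; rewrite oner_eq0.
case: (classic (forall xs y, size xs = N -> iter_bracket br xs y = 0)) => [h|h].
  exact: IH h.
have [xs [y [hs hy]]] : exists xs y, size xs = N /\ iter_bracket br xs y != 0.
  apply: NNPP => hn; apply: h => xs y hs.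
  case: (eqVneq (iter_bracket br xs y) 0) => // hne; exfalso; apply: hn.
  by exists xs, y.
exists (iter_bracket br xs y); split => // x.
rewrite (brA Hlie); have := HN (x :: xs) y; rewrite /= hs => -> //.
by rewrite oppr0.
Qed.

Theorem mainTheorem2 (R : realType) (p : nat)
    (br : 'cV[R]_(p.*2.+1) -> 'cV[R]_(p.*2.+1) -> 'cV[R]_(p.*2.+1))
    (w : 'rV[R]_(p.*2.+1)) :
  is_lie_bracket br -> is_nilpotent br -> is_contact_form br w ->
  exists (m : nat) (brh : 'cV[R]_m -> 'cV[R]_m -> 'cV[R]_m)
         (A : 'M[R]_(m, p.*2.+1)) (v : 'cV[R]_(p.*2.+1)),
    [/\ is_lie_bracket brh,
        v != 0 /\ (forall x, br v x = 0),
        (forall x : 'cV[R]_(p.*2.+1), A *m x = 0 <-> (exists a : R, x = a *: v)),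
        (forall y : 'cV[R]_m, (exists x : 'cV[R]_(p.*2.+1), A *m x = y)) /\
        (forall x y, A *m br x y = brh (A *m x) (A *m y)) &
        admits_affine_structure brh].
Proof.
move=> Hlie Hnil Hc.
have [v [vn0 Hvc]] := center_exists Hlie Hnil.
have Hrad : forall x, (forall y, wv w (br x y) = 0) -> exists a, x = a *: v.
  move=> x hx; apply: NNPP => hn.
  case: Hc => X; apply/negP; rewrite negbK; apply/eqP.
  case: (eqVneq (wv w v) 0) => hv.
    have hb : forall y, wv w (br v y) = 0.
      by move=> y; rewrite /wv (Hvc y) mulmx0 mxE.
    exact: (T_zero Hlie vn0 hv hb X).
  apply: (@T_zero _ _ _ _ Hlie (wv w v *: x - wv w x *: v)); last first.
  - move=> y; rewrite (brDl Hlie) (brNl Hlie) !(brZl Hlie) (Hvc y) scaler0 oppr0 addr0.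
    by rewrite wvZ hx mulr0.
  - rewrite wvD wvN !wvZ; ring.
  - apply/eqP => hk0; apply: hn; exists (wv w x / wv w v).
    apply: (scalerI hv); rewrite scalerA mulrC divfK //.
    by apply/eqP; rewrite -subr_eq0 hk0.
have [i0 hi0] : exists i0, v i0 0 != 0.
  apply/existsP; move: vn0; apply: contraR; rewrite negb_exists => /forallP h.
  apply/eqP/matrixP => a b; rewrite (ord1 b) mxE; exact/eqP/negPn/h.
have HAS := ASm v i0.
have Hker := kerAm hi0.
exists p.*2, (brh br (Am v i0) (Sm R i0)), (Am v i0), v.
split.
- exact: (brh_lie Hlie HAS Hker Hvc).
- by split.
- exact: Hker.
- split.
    by move=> y; exists (Sm R i0 *m y); rewrite mulmxA HAS mul1mx.
  exact: (brh_morph Hlie HAS Hker Hvc).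
- exact: (affine_brh Hlie HAS Hker Hvc Hrad).
Qed.
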